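(* Let $\rho\in(0,\infty)$ and $d=d(L)\to0$ with $dL\to\infty$. Let $h\in\mathcal D(\hat A)$ and $H(\mu)=\mu(h)$. Then $$\lim_{N/L\to\rho}\ \sup_{\eta\in\Omega_{L,N}}\Big|\frac1{dL}\mathfrak L_{L,N}\big(H\circ\hat\mu_{L,N}^{(\cdot)}\big)(\eta)-\hat\mu_{L,N}^{(\eta)}(\hat Ah)\Big|=0.$$
   Context: Inclusion process: $\Omega_{L,N}=\{\eta\in\mathbb N_0^L:\sum_x\eta_x=N\}$, $\mathfrak L_{L,N}f(\eta)=\sum_{x\ne y}\eta_x(d+\eta_y)[f(\eta^{x,y})-f(\eta)]$, $\eta^{x,y}=\eta-e^x+e^y$; ''$N/L\to\rho$'' means $N,L\to\infty$ with $N/L\to\rho$. $\overline{\mathbb R}_+=[0,\infty]$; $\hat\mu^{(\eta)}_{L,N}=\sum_x\frac{\eta_x}N\delta_{dL\eta_x/N}$. $\hat Ah(z)=zh''(z)+(2-z)h'(z)+(h(0)-h(z))$ on $\mathcal D(\hat A)=\{h\in C(\overline{\mathbb R}_+):h(\infty)=0,h|_{\mathbb R_+}\in C_c^3(\mathbb R_+)\}\cup\{\text{constants}\}$. *)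

(* Defs.v *)
From Stdlib Require Import Reals Arith.
From Coquelicot Require Import Coquelicot.
Open Scope R_scope.

Fixpoint sumR (n : nat) (f : nat -> R) : R :=
  match n with O => 0 | S k => sumR k f + f k end.
Fixpoint sumN (n : nat) (f : nat -> nat) : nat :=
  match n with O => 0%nat | S k => (sumN k f + f k)%nat end.

(* a configuration on L sites 0..L-1 is eta : nat -> nat (values at x >= L are irrelevant);
   eta in Omega_{L,N} iff sum_{x<L} eta_x = N *)
Definition Omega (L N : nat) (eta : nat -> nat) : Prop := sumN L eta = N.

(* eta^{x,y} = eta - e^x + e^y (only used for x <> y, with weight eta_x) *)
Definition jump (eta : nat -> nat) (x y : nat) : nat -> nat :=
  fun z => if Nat.eqb z x then (eta x - 1)%nat
           else if Nat.eqb z y then S (eta y) else eta z.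

(* generator of the inclusion process on the complete graph with L sites, parameter d *)
Definition gen (L : nat) (d : R) (f : (nat -> nat) -> R) (eta : nat -> nat) : R :=
  sumR L (fun x => sumR L (fun y =>
    if Nat.eqb x y then 0
    else INR (eta x) * (d + INR (eta y)) * (f (jump eta x y) - f eta))).

(* integral of g against hat mu^{(eta)}_{L,N} = sum_x (eta_x/N) delta_{d L eta_x / N} *)
Definition muhat (L N : nat) (d : R) (eta : nat -> nat) (g : R -> R) : R :=
  sumR L (fun x => INR (eta x) / INR N * g (d * INR L * INR (eta x) / INR N)).

Definition deriv_on_Rplus (f f' : R -> R) : Prop :=
  forall x, 0 <= x ->
    filterlim (fun y => (f y - f x) / (y - x))
      (within (fun y => 0 <= y /\ y <> x) (locally x)) (locally (f' x)).

Definition cont_on_Rplus (f : R -> R) : Prop :=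
  forall x, 0 <= x -> filterlim f (within (fun y => 0 <= y) (locally x)) (locally (f x)).

(* h : [0,oo] -> R is represented by its restriction to [0,oo) (values on (-oo,0) irrelevant).
   D(hat A) = {h in C([0,oo]) : h(oo) = 0, h|_{R_+} in C_c^3(R_+)} U {constants}. *)
Definition in_DAhat (h : R -> R) : Prop :=
  (exists c, forall z, 0 <= z -> h z = c) \/
  (exists (M : R) (h1 h2 h3 : R -> R),
      (forall z, M <= z -> h z = 0) /\
      deriv_on_Rplus h h1 /\ deriv_on_Rplus h1 h2 /\ deriv_on_Rplus h2 h3 /\
      cont_on_Rplus h3).

(* hat A h (z) = z h''(z) + (2 - z) h'(z) + (h(0) - h(z)), with h' = h1, h'' = h2 *)
Definition Ahat (h h1 h2 : R -> R) (z : R) : R :=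
  z * h2 z + (2 - z) * h1 z + (h 0 - h z).

(* Main.v *)
Require Import Defs.
From Stdlib Require Import Reals Arith.
From Coquelicot Require Import Coquelicot.
From Stdlib Require Import Lra Lia.
Open Scope R_scope.

Definition Dv (f f' : R -> R) := forall x, 0<=x -> forall e, 0<e ->
  exists dl, 0<dl /\ forall y, 0<=y -> y<>x -> Rabs(y-x)<dl ->
    Rabs((f y - f x)/(y-x) - f' x) < e.

Definition ext (f p : R -> R) t := if Rle_dec 0 t then f t else p t.

Lemma glue f f' p p' : Dv f f' -> (forall z, derivable_pt_lim p z (p' z)) ->
  p 0 = f 0 -> p' 0 = f' 0 -> forall z, derivable_pt_lim (ext f p) z (ext f' p' z).
Proof.
  intros Hf Hp H0 H0' z e He. unfold ext.
  destruct (Rtotal_order z 0) as [Hz|[Hz|Hz]].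
  - destruct (Hp z e He) as [dp Hdp].
    assert (Hm : 0 < Rmin dp (-z)) by (apply Rmin_pos; [apply cond_pos|lra]).
    exists (mkposreal _ Hm). intros h Hh Hh2. simpl in Hh2.
    assert (Hh3 : Rabs h < dp) by (eapply Rlt_le_trans; [exact Hh2| apply Rmin_l]).
    assert (Hh4 : Rabs h < - z) by (eapply Rlt_le_trans; [exact Hh2| apply Rmin_r]).
    destruct (Rle_dec 0 (z+h)) as [Hc|_]. { apply Rabs_def2 in Hh4. lra. }
    destruct (Rle_dec 0 z); [lra|]. apply Hdp; assumption.
  - subst z. destruct (Hp 0 e He) as [dp Hdp].
    destruct (Hf 0 (Rle_refl 0) e He) as [df [Hdf Hdf2]].
    assert (Hm : 0 < Rmin dp df) by (apply Rmin_pos; [apply cond_pos|lra]).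
    exists (mkposreal _ Hm). intros h Hh Hh2. simpl in Hh2.
    assert (Hh3 : Rabs h < dp) by (eapply Rlt_le_trans; [exact Hh2| apply Rmin_l]).
    assert (Hh4 : Rabs h < df) by (eapply Rlt_le_trans; [exact Hh2| apply Rmin_r]).
    destruct (Rle_dec 0 0); [|lra].
    destruct (Rle_dec 0 (0+h)) as [Hc|Hc].
    + specialize (Hdf2 (0+h) Hc). replace (0+h-0) with h in Hdf2 by ring.
      apply Hdf2; [lra| exact Hh4].
    + rewrite <- H0, <- H0'. apply Hdp; assumption.
  - destruct (Hf z (Rlt_le _ _ Hz) e He) as [df [Hdf Hdf2]].
    assert (Hm : 0 < Rmin df z) by (apply Rmin_pos; lra).
    exists (mkposreal _ Hm). intros h Hh Hh2. simpl in Hh2.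
    assert (Hh3 : Rabs h < df) by (eapply Rlt_le_trans; [exact Hh2| apply Rmin_l]).
    assert (Hh4 : Rabs h < z) by (eapply Rlt_le_trans; [exact Hh2| apply Rmin_r]).
    destruct (Rle_dec 0 (z+h)) as [Hc|Hc]; [| apply Rabs_def2 in Hh4; lra].
    destruct (Rle_dec 0 z); [|lra].
    specialize (Hdf2 (z+h) Hc). replace (z+h-z) with h in Hdf2 by ring.
    apply Hdf2; [lra| exact Hh3].
Qed.

Lemma cont_of_der f f1 x : is_derive f x (f1) -> continuity_pt f x.
Proof. intros H. apply derivable_continuous_pt. exists f1. apply is_derive_Reals; exact H. Qed.

Lemma taylor2 (f f1 f2 : R -> R) : (forall x, is_derive f x (f1 x)) -> (forall x, is_derive f1 x (f2 x)) ->
  forall a t e, (forall s, Rmin a (a+t) <= s <= Rmax a (a+t) -> Rabs (f2 s - f2 a) <= e) ->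
  Rabs (f (a+t) - f a - t*f1 a - t^2/2*f2 a) <= e*t^2.
Proof.
  intros Hf Hf1 a t e He.
  set (g := fun s : R => f s - f a - (s-a)*f1 a - (s-a)^2/2*f2 a).
  set (g' := fun s : R => f1 s - f1 a - (s-a)*f2 a).
  assert (Hg : forall x, is_derive g x (g' x)).
  { intros x. unfold g, g'. auto_derive. exists (f1 x); apply Hf.
    erewrite is_derive_unique; [|apply Hf]. field. }
  assert (Hg' : forall x, is_derive g' x (f2 x - f2 a)).
  { intros x. unfold g'. auto_derive. exists (f2 x); apply Hf1.
    erewrite is_derive_unique; [|apply Hf1]. field. }
  destruct (MVT_gen g a (a+t) g') as [c [Hc Hgc]].
  { intros x _. apply Hg. }
  { intros x _. apply (cont_of_der _ _ _ (Hg x)). }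
  destruct (MVT_gen g' a c (fun s => f2 s - f2 a)) as [c' [Hc' Hgc']].
  { intros x _. apply Hg'. }
  { intros x _. apply (cont_of_der _ _ _ (Hg' x)). }
  simpl in Hgc, Hgc'.
  assert (E1 : g (a+t) = f (a+t) - f a - t*f1 a - t^2/2*f2 a) by (unfold g; cbv beta; replace (a+t-a) with t by ring; field).
  assert (E2 : g a = 0) by (unfold g; cbv beta; field).
  assert (E3 : g' a = 0) by (unfold g'; cbv beta; ring).
  rewrite <- E1. replace (g (a+t)) with (g' c * (a+t-a)) by lra.
  replace (g' c) with ((f2 c' - f2 a) * (c - a)) by lra.
  assert (Hca : Rabs (c - a) <= Rabs t).
  { unfold Rmin, Rmax in Hc. destruct (Rle_dec a (a+t)); apply Rabs_le; 
    unfold Rabs; destruct (Rcase_abs t); lra. }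
  assert (Hc'2 : Rmin a (a+t) <= c' <= Rmax a (a+t)).
  { unfold Rmin, Rmax in *. destruct (Rle_dec a (a+t)); destruct (Rle_dec a c); lra. }
  specialize (He c' Hc'2).
  rewrite !Rabs_mult. replace (a+t-a) with t by ring.
  replace (e*t^2) with (e * Rabs t * Rabs t) by (rewrite <- pow2_abs; ring).
  apply Rmult_le_compat_r; [apply Rabs_pos|].
  apply Rmult_le_compat; try apply Rabs_pos; assumption.
Qed.

Lemma Dv_of f f' : deriv_on_Rplus f f' -> Dv f f'.
Proof.
  intros H x Hx e He.
  destruct (H x Hx (ball (f' x) (mkposreal e He)) (locally_ball _ _)) as [dl Hdl].
  exists dl; split; [apply cond_pos|].
  intros y Hy Hyx Hd. apply (Hdl y); [exact Hd | split; assumption].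
Qed.

Lemma Dv_ext f f' g g' : Dv f f' -> (forall z, 0<=z -> f z = g z) -> (forall z, 0<=z -> f' z = g' z) -> Dv g g'.
Proof.
  intros H E E' x Hx e He. destruct (H x Hx e He) as [dl [Hdl Hy]].
  exists dl; split; [lra|]. intros y Hy0 Hyx Hd.
  rewrite <- (E y Hy0), <- (E x Hx), <- (E' x Hx). apply Hy; assumption.
Qed.

Lemma Rabs_half_lt dl : 0 < dl -> Rabs (dl/2) < dl.
Proof. intros. rewrite Rabs_right; lra. Qed.

Lemma Dv_unique f g1 g2 : Dv f g1 -> Dv f g2 -> forall x, 0<=x -> g1 x = g2 x.
Proof.
  intros H1 H2 x Hx. destruct (Req_dec (g1 x) (g2 x)) as [E|E]; [exact E|exfalso].
  assert (He : 0 < Rabs (g1 x - g2 x) / 2) by (apply Rdiv_lt_0_compat; [apply Rabs_pos_lt; lra|lra]).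
  destruct (H1 x Hx _ He) as [d1 [Hd1 Hy1]]. destruct (H2 x Hx _ He) as [d2 [Hd2 Hy2]].
  set (m := Rmin d1 d2). assert (Hm : 0 < m) by (apply Rmin_pos; lra).
  set (y := x + m/2).
  assert (Hy0 : 0 <= y) by (unfold y; lra). assert (Hyx : y <> x) by (unfold y; lra).
  assert (Hyy : Rabs (y - x) = m/2) by (unfold y; rewrite Rabs_right; lra).
  assert (A1 : Rabs (y-x) < d1) by (rewrite Hyy; pose proof (Rmin_l d1 d2); fold m in H; lra).
  assert (A2 : Rabs (y-x) < d2) by (rewrite Hyy; pose proof (Rmin_r d1 d2); fold m in H; lra).
  specialize (Hy1 y Hy0 Hyx A1). specialize (Hy2 y Hy0 Hyx A2).
  set (q := (f y - f x)/(y-x)) in *.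
  assert (Rabs (g1 x - g2 x) <= Rabs (q - g2 x) + Rabs (q - g1 x)).
  { replace (g1 x - g2 x) with ((q - g2 x) - (q - g1 x)) by ring. apply Rabs_triang_inv2 || (eapply Rle_trans; [apply Rabs_triang|]; rewrite Rabs_Ropp; lra). }
  lra.
Qed.

Lemma Dv_zero f f' M c : Dv f f' -> 0 <= M -> (forall z, M <= z -> f z = c) -> forall x, M <= x -> f' x = 0.
Proof.
  intros H HM Hc x Hx. destruct (Req_dec (f' x) 0) as [E|E]; [exact E|exfalso].
  assert (He : 0 < Rabs (f' x)) by (apply Rabs_pos_lt; lra).
  destruct (H x ltac:(lra) _ He) as [dl [Hdl Hy]].
  specialize (Hy (x + dl/2) ltac:(lra) ltac:(lra)).
  replace (x + dl/2 - x) with (dl/2) in Hy by ring.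
  rewrite (Hc (x+dl/2)) in Hy by lra. rewrite (Hc x) in Hy by lra.
  replace ((c - c) / (dl/2) - f' x) with (- f' x) in Hy by (field; lra).
  rewrite Rabs_Ropp in Hy. specialize (Hy (Rabs_half_lt _ Hdl)). lra.
Qed.

Lemma Dv_cont f f' : Dv f f' -> forall x, 0<=x -> forall e, 0<e ->
  exists dl, 0<dl /\ forall y, 0<=y -> Rabs(y-x)<dl -> Rabs(f y - f x) < e.
Proof.
  intros H x Hx e He. destruct (H x Hx 1 Rlt_0_1) as [d1 [Hd1 Hy]].
  set (K := Rabs (f' x) + 1).
  assert (HK : 0 < K) by (unfold K; pose proof (Rabs_pos (f' x)); lra).
  exists (Rmin d1 (e / K)). split. { apply Rmin_pos; [lra| apply Rdiv_lt_0_compat; lra]. }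
  intros y Hy0 Hd. destruct (Req_dec y x) as [E|E].
  { subst. replace (f x - f x) with 0 by ring. rewrite Rabs_R0; lra. }
  assert (Hd1' : Rabs (y-x) < d1) by (eapply Rlt_le_trans; [exact Hd| apply Rmin_l]).
  assert (Hd2 : Rabs (y-x) < e/K) by (eapply Rlt_le_trans; [exact Hd| apply Rmin_r]).
  specialize (Hy y Hy0 E Hd1').
  assert (Hq : Rabs ((f y - f x)/(y-x)) <= K).
  { unfold K. replace ((f y - f x)/(y-x)) with (((f y - f x)/(y-x) - f' x) + f' x) by ring.
    eapply Rle_trans; [apply Rabs_triang|]. lra. }
  assert (Hyx : y - x <> 0) by lra.
  replace (f y - f x) with ((f y - f x)/(y-x) * (y-x)) by (field; exact Hyx).
  rewrite Rabs_mult.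
  apply Rle_lt_trans with (K * Rabs (y-x)).
  { apply Rmult_le_compat_r; [apply Rabs_pos| exact Hq]. }
  apply (Rmult_lt_compat_l K) in Hd2; [|lra].
  replace (K * (e/K)) with e in Hd2 by (field; lra). lra.
Qed.

Lemma mvt_bound (f f' : R -> R) B z : (forall x, is_derive f x (f' x)) -> 0 <= z ->
  (forall s, 0 <= s <= z -> Rabs (f' s) <= B) -> Rabs (f z - f 0) <= B * z.
Proof.
  intros Hf Hz HB.
  destruct (MVT_gen f 0 z f') as [c [Hc E]].
  { intros x _. apply Hf. }
  { intros x _. apply (cont_of_der _ _ _ (Hf x)). }
  simpl in Hc. rewrite Rmin_left in Hc by lra. rewrite Rmax_right in Hc by lra.
  rewrite E. rewrite Rabs_mult. replace (z-0) with z by ring. rewrite (Rabs_right z) by lra.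
  apply Rmult_le_compat_r; [lra| apply HB; lra].
Qed.
Lemma cont_pt_eps f x : (forall e, 0<e -> exists dl, 0<dl /\ forall y, Rabs(y-x)<dl -> Rabs(f y - f x) < e) -> continuity_pt f x.
Proof.
  intros H e He. destruct (H e He) as [dl [Hdl Hy]]. exists dl; split; [lra|].
  intros y [_ Hy2]. apply Hy. exact Hy2.
Qed.

Lemma ext_const_cont (f : R -> R) : (forall x, 0<=x -> forall e, 0<e ->
  exists dl, 0<dl /\ forall y, 0<=y -> Rabs(y-x)<dl -> Rabs(f y - f x) < e) ->
  forall z, continuity_pt (ext f (fun _ => f 0)) z.
Proof.
  intros Hc z. apply cont_pt_eps. intros e He. unfold ext.
  destruct (Rtotal_order z 0) as [Hz|[Hz|Hz]].
  - exists (-z). split; [lra|]. intros y Hy. apply Rabs_def2 in Hy.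
    destruct (Rle_dec 0 y); [lra|]. destruct (Rle_dec 0 z); [lra|].
    replace (f 0 - f 0) with 0 by ring. rewrite Rabs_R0; lra.
  - subst z. destruct (Hc 0 (Rle_refl 0) e He) as [dl [Hdl Hy]].
    exists dl; split; [lra|]. intros y Hyd. destruct (Rle_dec 0 0); [|lra].
    destruct (Rle_dec 0 y) as [Hy0|Hy0].
    + apply Hy; assumption.
    + replace (f 0 - f 0) with 0 by ring. rewrite Rabs_R0; lra.
  - destruct (Hc z (Rlt_le _ _ Hz) e He) as [dl [Hdl Hy]].
    exists (Rmin dl z). split; [apply Rmin_pos; lra|]. intros y Hyd.
    assert (H1 : Rabs (y - z) < dl) by (eapply Rlt_le_trans; [exact Hyd| apply Rmin_l]).
    assert (H2 : Rabs (y - z) < z) by (eapply Rlt_le_trans; [exact Hyd| apply Rmin_r]).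
    apply Rabs_def2 in H2 as H3.
    destruct (Rle_dec 0 y); [|lra]. destruct (Rle_dec 0 z); [|lra]. apply Hy; assumption.
Qed.

Lemma ext_eq f p z : 0 <= z -> ext f p z = f z.
Proof. intros Hz. unfold ext. destruct (Rle_dec 0 z); [reflexivity|lra]. Qed.

Lemma poly2_der a b c z : derivable_pt_lim (fun t => a + b*t + c*t^2/2) z (b + c*z).
Proof. apply is_derive_Reals. auto_derive; [exact I|]. field. Qed.
Lemma poly1_der a b z : derivable_pt_lim (fun t => a + b*t) z ((fun _ => b) z).
Proof. apply is_derive_Reals. auto_derive; [exact I|]. simpl. ring. Qed.

Lemma analysis_pkg h h1 h2 : in_DAhat h -> deriv_on_Rplus h h1 -> deriv_on_Rplus h1 h2 ->
 exists (P P1 P2 : R -> R) (B : R),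
   0 <= B /\
   (forall x, is_derive P x (P1 x)) /\ (forall x, is_derive P1 x (P2 x)) /\
   (forall z, 0<=z -> P z = z * h z /\ P1 z = h z + z*h1 z /\ P2 z = 2*h1 z + z*h2 z) /\
   (forall z, 0<=z -> Rabs (P2 z) <= B /\ Rabs (z * P2 z) <= B) /\
   (forall e, 0<e -> exists dl, 0<dl /\ forall u v, 0<=u -> 0<=v -> Rabs(u-v) < dl -> Rabs(P2 u - P2 v) <= e).
Proof.
  intros HD Hh Hh1. apply Dv_of in Hh. apply Dv_of in Hh1.
  set (H := ext h (fun t => h 0 + h1 0 * t + h2 0 * t^2/2)).
  set (H1 := ext h1 (fun t => h1 0 + h2 0 * t)).
  set (H2 := ext h2 (fun _ => h2 0)).
  assert (dH : forall z, is_derive H z (H1 z)).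
  { intros z. apply is_derive_Reals. unfold H, H1. apply glue; [exact Hh| | |].
    - intros; apply poly2_der.
    - simpl; field.
    - simpl; ring. }
  assert (dH1 : forall z, is_derive H1 z (H2 z)).
  { intros z. apply is_derive_Reals. unfold H1, H2. apply glue; [exact Hh1| | |].
    - intros; apply poly1_der.
    - simpl; ring.
    - reflexivity. }
  exists (fun t => t * H t), (fun t => H t + t * H1 t), (fun t => 2 * H1 t + t * H2 t).
  assert (dP : forall x, is_derive (fun t => t * H t) x (H x + x * H1 x)).
  { intros x. auto_derive; [exists (H1 x); apply dH|]. erewrite is_derive_unique; [|apply dH]. ring. }
  assert (dP1 : forall x, is_derive (fun t => H t + t * H1 t) x (2 * H1 x + x * H2 x)).
  { intros x. auto_derive; [split; [exists (H1 x); apply dH| split; [exists (H2 x); apply dH1|exact I]]|].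
    erewrite (is_derive_unique (fun x0 => H x0)); [|apply dH]. erewrite (is_derive_unique (fun x0 => H1 x0)); [|apply dH1]. ring. }
  assert (Eq : forall z, 0<=z -> z * H z = z * h z /\ H z + z * H1 z = h z + z*h1 z /\ 2 * H1 z + z * H2 z = 2*h1 z + z*h2 z).
  { intros z Hz. unfold H, H1, H2. rewrite !ext_eq by exact Hz. auto. }
  destruct HD as [[c Hc] | [M [g1 [g2 [g3 [HM [Hg1 [Hg2 [Hg3 Hg3c]]]]]]]]].
  - assert (Z1 : forall x, 0 <= x -> h1 x = 0) by (intros; eapply Dv_zero; [exact Hh| apply Rle_refl| exact Hc| assumption]).
    assert (Z2 : forall x, 0 <= x -> h2 x = 0) by (intros; eapply Dv_zero; [exact Hh1| apply Rle_refl| exact Z1| assumption]).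
    assert (Z : forall z, 0 <= z -> 2 * H1 z + z * H2 z = 0).
    { intros z Hz. destruct (Eq z Hz) as [_ [_ ->]]. rewrite Z1, Z2 by exact Hz. ring. }
    exists 0. split; [lra|]. split; [exact dP|]. split; [exact dP1|]. split; [exact Eq|]. split.
    + intros z Hz. rewrite Z by exact Hz. rewrite Rmult_0_r, Rabs_R0. lra.
    + intros e He. exists 1. split; [lra|]. intros u v Hu Hv _. rewrite Z, Z by assumption.
      replace (0-0) with 0 by ring. rewrite Rabs_R0; lra.
  - set (Mp := Rmax M 0).
    assert (HMp : 0 <= Mp) by apply Rmax_r.
    assert (HM' : forall z, Mp <= z -> h z = 0) by (intros z Hz; apply HM; eapply Rle_trans; [apply Rmax_l| exact Hz]).
    assert (E1 : forall x, 0 <= x -> g1 x = h1 x) by (apply Dv_unique with h; [apply Dv_of; exact Hg1| exact Hh]).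
    assert (Dh1g2 : Dv h1 g2) by (apply Dv_ext with g1 g2; [apply Dv_of; exact Hg2| exact E1| reflexivity]).
    assert (E2 : forall x, 0 <= x -> g2 x = h2 x) by (apply Dv_unique with h1; [exact Dh1g2| exact Hh1]).
    assert (Dh2 : Dv h2 g3) by (apply Dv_ext with g2 g3; [apply Dv_of; exact Hg3| exact E2| reflexivity]).
    assert (Z1 : forall x, Mp <= x -> h1 x = 0) by (intros; eapply Dv_zero; [exact Hh| exact HMp| exact HM'| assumption]).
    assert (Z2 : forall x, Mp <= x -> h2 x = 0) by (intros; eapply Dv_zero; [exact Hh1| exact HMp| exact Z1| assumption]).
    assert (Z : forall z, Mp <= z -> 2 * H1 z + z * H2 z = 0).
    { intros z Hz. destruct (Eq z ltac:(lra)) as [_ [_ ->]]. rewrite Z1, Z2 by exact Hz. ring. }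
    set (P2 := fun t => 2 * H1 t + t * H2 t).
    assert (contP2 : forall z, continuity_pt P2 z).
    { intros z. unfold P2.
      change (continuity_pt (plus_fct (fun t => 2 * H1 t) (fun t => t * H2 t)) z). apply continuity_pt_plus.
      - change (continuity_pt (mult_fct (fct_cte 2) H1) z). apply continuity_pt_mult.
        + apply continuity_pt_const. intros ? ?; reflexivity.
        + apply (cont_of_der _ _ _ (dH1 z)).
      - change (continuity_pt (mult_fct id H2) z). apply continuity_pt_mult.
        + apply derivable_continuous_pt, derivable_pt_id.
        + apply ext_const_cont. apply (Dv_cont h2 g3 Dh2). }
    destruct (continuity_ab_maj P2 0 Mp HMp (fun c _ => contP2 c)) as [Mx [HMx _]].
    destruct (continuity_ab_min P2 0 Mp HMp (fun c _ => contP2 c)) as [mx [Hmx _]].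
    set (B0 := Rabs (P2 Mx) + Rabs (P2 mx)).
    assert (HB0 : 0 <= B0) by (unfold B0; pose proof (Rabs_pos (P2 Mx)); pose proof (Rabs_pos (P2 mx)); lra).
    assert (HB0c : forall c, 0 <= c -> Rabs (P2 c) <= B0).
    { intros c Hc. destruct (Rle_dec c Mp) as [Hc2|Hc2].
      - specialize (HMx c (conj Hc Hc2)). specialize (Hmx c (conj Hc Hc2)).
        pose proof (Rle_abs (P2 Mx)). pose proof (Rle_abs (- P2 mx)). rewrite Rabs_Ropp in H3.
        pose proof (Rabs_pos (P2 Mx)). pose proof (Rabs_pos (P2 mx)).
        apply Rabs_le. unfold B0. lra.
      - unfold P2. rewrite Z by lra. rewrite Rabs_R0. exact HB0. }
    exists (B0 * (Mp + 1)). split; [nra|]. split; [exact dP|]. split; [exact dP1|]. split; [exact Eq|]. split.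
    + intros z Hz. pose proof (Rmult_le_pos B0 Mp HB0 HMp). split.
      * change (Rabs (P2 z) <= B0 * (Mp + 1)). specialize (HB0c z Hz). nra.
      * change (Rabs (z * P2 z) <= B0 * (Mp + 1)). rewrite Rabs_mult, (Rabs_right z) by lra. destruct (Rle_dec z Mp) as [Hc2|Hc2].
        -- specialize (HB0c z Hz). pose proof (Rabs_pos (P2 z)). nra.
        -- unfold P2. rewrite Z by lra. rewrite Rabs_R0. nra.
    + intros e He. change (exists dl, 0 < dl /\ forall u v, 0<=u -> 0<=v -> Rabs(u-v) < dl -> Rabs(P2 u - P2 v) <= e).
      destruct (Heine P2 (fun c => 0 <= c <= Mp + 1) (compact_P3 0 (Mp+1)) (fun x _ => contP2 x) (mkposreal e He)) as [dl Hdl].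
      exists (Rmin dl 1). split; [apply Rmin_pos; [apply cond_pos|lra]|].
      intros u v Hu Hv Huv.
      assert (A1 : Rabs (u - v) < dl) by (eapply Rlt_le_trans; [exact Huv| apply Rmin_l]).
      assert (A2 : Rabs (u - v) < 1) by (eapply Rlt_le_trans; [exact Huv| apply Rmin_r]).
      apply Rabs_def2 in A2.
      destruct (Rle_dec u (Mp+1)) as [Hu1|Hu1]; destruct (Rle_dec v (Mp+1)) as [Hv1|Hv1].
      * left. apply (Hdl u v); [split; assumption| split; assumption| exact A1].
      * unfold P2. rewrite Z, Z by lra. replace (0-0) with 0 by ring. rewrite Rabs_R0; lra.
      * unfold P2. rewrite Z, Z by lra. replace (0-0) with 0 by ring. rewrite Rabs_R0; lra.
      * unfold P2. rewrite Z, Z by lra. replace (0-0) with 0 by ring. rewrite Rabs_R0; lra.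
Qed.

Lemma sumR_ext n f g : (forall x, (x < n)%nat -> f x = g x) -> sumR n f = sumR n g.
Proof. induction n; intros H; simpl; [reflexivity|]. rewrite IHn by (intros; apply H; lia). rewrite H by lia. reflexivity. Qed.
Lemma sumR_plus n f g : sumR n (fun x => f x + g x) = sumR n f + sumR n g.
Proof. induction n; simpl; [ring|]. rewrite IHn; ring. Qed.
Lemma sumR_scal n c f : sumR n (fun x => c * f x) = c * sumR n f.
Proof. induction n; simpl; [ring|]. rewrite IHn; ring. Qed.
Lemma sumR_const n c : sumR n (fun _ => c) = INR n * c.
Proof. induction n; simpl sumR; [simpl; ring|]. rewrite IHn, S_INR; ring. Qed.
Lemma sumR_le n f g : (forall x, (x < n)%nat -> f x <= g x) -> sumR n f <= sumR n g.
Proof. induction n; intros H; simpl; [lra|]. pose proof (H n ltac:(lia)). pose proof (IHn ltac:(intros; apply H; lia)). lra. Qed.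
Lemma sumR_abs n f : Rabs (sumR n f) <= sumR n (fun x => Rabs (f x)).
Proof. induction n; simpl; [rewrite Rabs_R0; lra|]. eapply Rle_trans; [apply Rabs_triang|]. lra. Qed.
Lemma sumR_INR n e : sumR n (fun x => INR (e x)) = INR (sumN n e).
Proof. induction n; simpl sumR; simpl sumN; [reflexivity|]. rewrite IHn, plus_INR; reflexivity. Qed.
Lemma sumN_ge n e x : (x < n)%nat -> (e x <= sumN n e)%nat.
Proof. induction n; intros H; simpl; [lia|]. destruct (Nat.eq_dec x n); [subst; lia|]. specialize (IHn ltac:(lia)); lia. Qed.

Lemma sumR_pick n f x : (x < n)%nat -> sumR n (fun y => if Nat.eqb x y then 0 else f y) = sumR n f - f x.
Proof.
  induction n; intros H; [lia|]. simpl. destruct (Nat.eq_dec x n) as [->|Hne].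
  - rewrite Nat.eqb_refl. rewrite (sumR_ext n _ f). { ring. }
    intros y Hy. destruct (Nat.eqb_spec n y); [lia|reflexivity].
  - rewrite IHn by lia. destruct (Nat.eqb_spec x n); [lia|]. ring.
Qed.

Lemma sumR_single n y c : (y < n)%nat -> sumR n (fun z => if Nat.eqb z y then c else 0) = c.
Proof.
  induction n; intros H; [lia|]. simpl. destruct (Nat.eq_dec y n) as [->|Hne].
  - rewrite Nat.eqb_refl. rewrite (sumR_ext n _ (fun _ => 0)). { rewrite sumR_const; ring. }
    intros z Hz. destruct (Nat.eqb_spec z n); [lia|reflexivity].
  - rewrite IHn by lia. destruct (Nat.eqb_spec n y); [lia|]. ring.
Qed.

Lemma sumR_jump n g x y A B : (x < n)%nat -> (y < n)%nat -> x <> y ->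
  sumR n (fun z => if Nat.eqb z x then A else if Nat.eqb z y then B else g z) = sumR n g - g x - g y + A + B.
Proof.
  intros Hx Hy Hxy.
  rewrite (sumR_ext n _ (fun z => (g z + (if Nat.eqb z x then A - g x else 0)) + (if Nat.eqb z y then B - g y else 0))).
  - rewrite sumR_plus, sumR_plus, sumR_single, sumR_single by assumption. ring.
  - intros z Hz. destruct (Nat.eqb_spec z x); destruct (Nat.eqb_spec z y); subst; try lia; ring.
Qed.

Lemma sumR_minus n f g : sumR n (fun x => f x - g x) = sumR n f - sumR n g.
Proof. induction n; simpl; [ring|]. rewrite IHn; ring. Qed.

Lemma double_id L (n a b : nat -> R) c :
  sumR L (fun x => sumR L (fun y => if Nat.eqb x y then 0 else n x*(c+n y)*(a x+b y))) =
  (c*INR L + sumR L n)*sumR L (fun x => n x*a x) + sumR L n * sumR L (fun y => (c+n y)*b y)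
  - sumR L (fun x => n x*(c+n x)*(a x+b x)).
Proof.
  set (S := sumR L n). set (Tb := sumR L (fun y => (c+n y)*b y)).
  rewrite (sumR_ext L _ (fun x => (c*INR L + S) * (n x * a x) + (Tb * n x) - n x*(c+n x)*(a x+b x))).
  - rewrite sumR_minus, sumR_plus, sumR_scal, sumR_scal. fold S. ring.
  - intros x Hx. rewrite sumR_pick by exact Hx. f_equal.
    rewrite (sumR_ext L _ (fun y => (n x * a x) * (c + n y) + n x * ((c + n y) * b y))) by (intros; ring).
    rewrite sumR_plus, sumR_scal, sumR_scal, sumR_plus, sumR_const. fold S Tb. ring.
Qed.

Lemma abs4 a b c e : Rabs (a + b - c - e) <= Rabs a + Rabs b + Rabs c + Rabs e.
Proof.
  unfold Rminus. pose proof (Rabs_triang (a+b+-c) (-e)). pose proof (Rabs_triang (a+b) (-c)).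
  pose proof (Rabs_triang a b). rewrite Rabs_Ropp in *. lra.
Qed.
Lemma abs3 a b c : Rabs (a + b + c) <= Rabs a + Rabs b + Rabs c.
Proof. pose proof (Rabs_triang (a+b) c). pose proof (Rabs_triang a b). lra. Qed.

Lemma main_bound (L N : nat) (d : R) (eta : nat -> nat) (h h1 h2 P P1 P2 : R -> R) (B w : R) :
  (1 <= N)%nat -> (1 <= L)%nat -> 0 < d -> 0 <= B -> 0 <= w -> Omega L N eta ->
  (forall z, 0<=z -> P z = z*h z /\ P1 z = h z + z*h1 z /\ P2 z = 2*h1 z + z*h2 z) ->
  (forall z, 0<=z -> Rabs (P2 z) <= B /\ Rabs (z*P2 z) <= B) ->
  (forall z, 0<=z -> Rabs (P1 z - P1 0) <= B*z) ->
  (forall z, 0<=z ->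
     (d*INR L/INR N <= z -> Rabs (P(z-d*INR L/INR N) - P z + d*INR L/INR N*P1 z - (d*INR L/INR N)^2/2*P2 z) <= w*(d*INR L/INR N)^2) /\
     Rabs (P(z+d*INR L/INR N) - P z - d*INR L/INR N*P1 z - (d*INR L/INR N)^2/2*P2 z) <= w*(d*INR L/INR N)^2) ->
  Rabs (/ (d * INR L) * gen L d (fun e => muhat L N d e h) eta - muhat L N d eta (Ahat h h1 h2))
   <= d*B + (d*INR L/INR N)*B + (d*INR L/INR N)*d*B/(d*INR L) + B/(d*INR L)
      + w*(2*(d*INR L/INR N)+4+2*d/INR N).
Proof.
  intros HN HL Hd HB Hw HOm Eq Bnd Lip Tay.
  assert (HNr : 0 < INR N) by (apply lt_0_INR; lia).
  assert (HLr : 0 < INR L) by (apply lt_0_INR; lia).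
  set (D := d * INR L) in *. assert (HD : 0 < D) by (unfold D; nra).
  set (e := D / INR N) in *. assert (He : 0 < e) by (unfold e; apply Rdiv_lt_0_compat; lra).
  set (n := fun x => INR (eta x)).
  assert (Sn : sumR L n = INR N) by (unfold n; rewrite sumR_INR; unfold Omega in HOm; rewrite HOm; reflexivity).
  assert (nle : forall x, (x < L)%nat -> n x <= INR N).
  { intros x Hx. unfold n. apply le_INR. rewrite <- HOm. apply sumN_ge; exact Hx. }
  assert (npos : forall x, 0 <= n x) by (intros; apply pos_INR).
  pose (q := fun k : nat => INR k / INR N * h (d * INR L * INR k / INR N)).
  assert (Fq : forall k, q k = P (e * INR k) / D).
  { intros k. assert (Hk : 0 <= e * INR k) by (pose proof (pos_INR k); nra).
    destruct (Eq _ Hk) as [-> _]. unfold q.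
    replace (d * INR L * INR k / INR N) with (e * INR k) by (unfold e, D; field; lra).
    unfold e, D; field; lra. }
  pose (a := fun x => q (eta x - 1)%nat - q (eta x)).
  pose (b := fun x => q (S (eta x)) - q (eta x)).
  assert (Fm : forall et, muhat L N d et h = sumR L (fun z => q (et z))) by reflexivity.
  assert (G1 : gen L d (fun et => muhat L N d et h) eta =
     sumR L (fun x => sumR L (fun y => if Nat.eqb x y then 0 else n x*(d+n y)*(a x+b y)))).
  { unfold gen. apply sumR_ext. intros x Hx. apply sumR_ext. intros y Hy.
    destruct (Nat.eqb_spec x y) as [_|Hxy]; [reflexivity|].
    rewrite !Fm.
    rewrite (sumR_ext L (fun z => q (jump eta x y z)) (fun z => if Nat.eqb z x then q (eta x - 1)%nat else if Nat.eqb z y then q (S (eta y)) else q (eta z))).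
    - rewrite sumR_jump by assumption. unfold a, b, n. ring.
    - intros z _. unfold jump. destruct (Nat.eqb z x); [reflexivity|]. destruct (Nat.eqb z y); reflexivity. }
  rewrite G1, double_id, Sn.
  assert (Tm : muhat L N d eta (Ahat h h1 h2) = sumR L (fun x => n x / INR N * Ahat h h1 h2 (e * n x))).
  { change (sumR L (fun x => n x / INR N * Ahat h h1 h2 (d*INR L*n x/INR N)) = sumR L (fun x => n x / INR N * Ahat h h1 h2 (e * n x))). apply sumR_ext; intros.
    f_equal. f_equal. unfold e, D; field; lra. }
  rewrite Tm.
  pose (W := fun x => /D*((d*INR L+INR N)*(n x*a x) + INR N*((d+n x)*b x) - n x*(d+n x)*(a x+b x)) - n x/INR N*Ahat h h1 h2 (e*n x)).
  match goal with |- Rabs ?X <= _ => replace X with (sumR L W) end.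
  2:{ rewrite (sumR_ext L W (fun x => /D*((d*INR L+INR N)*(n x*a x)) + /D*(INR N*((d+n x)*b x)) - /D*(n x*(d+n x)*(a x+b x)) - n x/INR N*Ahat h h1 h2 (e*n x))) by (intros; unfold W; ring).
      rewrite !sumR_minus, !sumR_plus, !sumR_scal. unfold D. ring. }
  pose (z := fun x => e * n x).
  pose (r := fun x => D * a x - (- e * P1 (z x) + e^2/2 * P2 (z x))).
  pose (s := fun x => D * b x - (e * P1 (z x) + e^2/2 * P2 (z x))).
  pose (V := fun x => (d*D*(P1 (z x) - h 0) + (e^2*D*n x/2 + e^2*INR N*d/2 - e^2*n x*d - e^2*n x^2)*P2 (z x)
       + ((D+INR N)*n x*r x + INR N*(d+n x)*s x - n x*(d+n x)*(r x + s x)))/D^2).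
  assert (zpos : forall x, 0 <= z x) by (intros; unfold z; pose proof (npos x); nra).
  assert (WV : forall x, (x<L)%nat -> W x = V x + (d*D - D*e*n x)*h 0/D^2).
  { intros x _. assert (HA : Ahat h h1 h2 (e * n x) = P2 (z x) - P1 (z x) + h 0).
    { destruct (Eq _ (zpos x)) as [_ [E1 E2]]. unfold Ahat. fold (z x). rewrite E1, E2. ring. }
    unfold W. rewrite HA. unfold V, r, s. unfold e, D; field; lra. }
  rewrite (sumR_ext L W (fun x => V x + (d*D - D*e*n x)*h 0/D^2)) by exact WV.
  rewrite sumR_plus.
  assert (Z0 : sumR L (fun x => (d*D - D*e*n x)*h 0/D^2) = 0).
  { rewrite (sumR_ext L _ (fun x => (d*D*h 0/D^2) + (- (D*e*h 0/D^2)) * n x)) by (intros; field; lra).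
    rewrite sumR_plus, sumR_const, sumR_scal, Sn. unfold e, D. field. lra. }
  rewrite Z0, Rplus_0_r.
  set (cn := (d*D*B*e + e^2*D*B/2 + e^2*d*B + e*B + w*e^2*((D+INR N) + INR N + 2*(d+INR N)))/D^2).
  set (c0 := (e^2*INR N*d*B/2 + w*e^2*INR N*d)/D^2).
  eapply Rle_trans; [apply sumR_abs|].
  eapply Rle_trans; [apply (sumR_le L _ (fun x => cn * n x + c0))|].
  2:{ rewrite sumR_plus, sumR_scal, sumR_const, Sn. unfold cn, c0. right. unfold e, D; field. lra. }
  intros x Hx.
  assert (Db : D * b x = P (z x + e) - P (z x)).
  { unfold b. rewrite !Fq. rewrite S_INR. replace (e*(INR (eta x)+1)) with (z x + e) by (unfold z, n; ring).
    unfold z, n. field; lra. }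
  assert (Hs : Rabs (s x) <= w*e^2).
  { unfold s. replace (D * b x - (e * P1 (z x) + e^2/2 * P2 (z x))) with (P (z x + e) - P (z x) - e*P1(z x) - e^2/2*P2(z x)) by (rewrite Db; ring).
    apply (Tay _ (zpos x)). }
  assert (Hr : Rabs (n x * r x) <= n x * (w*e^2)).
  { destruct (Nat.eq_dec (eta x) 0) as [E0|E0].
    - assert (n x = 0) as -> by (unfold n; rewrite E0; reflexivity). rewrite Rmult_0_l, Rabs_R0. lra.
    - assert (Hn1 : 1 <= n x) by (unfold n; replace 1 with (INR 1) by reflexivity; apply le_INR; lia).
      assert (Da : D * a x = P (z x - e) - P (z x)).
      { unfold a. rewrite !Fq. rewrite minus_INR by lia. replace (e*(INR (eta x) - INR 1)) with (z x - e) by (unfold z, n; simpl; ring).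
        unfold z, n. field; lra. }
      assert (Hez : e <= z x) by (unfold z; nra).
      rewrite Rabs_mult, (Rabs_right (n x)) by lra. apply Rmult_le_compat_l; [lra|].
      unfold r. replace (D * a x - (- e * P1 (z x) + e^2/2 * P2 (z x))) with (P (z x - e) - P (z x) + e*P1(z x) - e^2/2*P2(z x)) by (rewrite Da; ring).
      apply (Tay _ (zpos x)); exact Hez. }
  assert (HP10 : P1 0 = h 0) by (destruct (Eq 0 (Rle_refl 0)) as [_ [E _]]; rewrite E; ring).
  destruct (Bnd _ (zpos x)) as [B1 B2].
  pose proof (Lip _ (zpos x)) as L1. rewrite HP10 in L1.
  pose proof (nle x Hx) as Hnle. pose proof (npos x) as Hnp. pose proof (zpos x) as Hzp.
  unfold V.
  set (nn := n x) in *. set (zz := z x) in *. set (rr := r x) in *. set (ss := s x) in *.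
  assert (Hz : zz = e * nn) by reflexivity.
  set (T1 := d*D*(P1 zz - h 0)).
  set (T2 := (e^2*D*nn/2 + e^2*INR N*d/2 - e^2*nn*d - e^2*nn^2)*P2 zz).
  set (E := (D+INR N)*nn*rr + INR N*(d+nn)*ss - nn*(d+nn)*(rr + ss)).
  assert (BT1 : Rabs T1 <= d*D*B*e*nn).
  { unfold T1. rewrite Rabs_mult, (Rabs_right (d*D)) by nra. rewrite Hz in L1.
    replace (d*D*B*e*nn) with (d*D*(B*(e*nn))) by ring. apply Rmult_le_compat_l; [nra|exact L1]. }
  assert (BT2 : Rabs T2 <= (e^2*D*nn/2 + e^2*INR N*d/2 + e^2*nn*d)*B + e*nn*B).
  { unfold T2. replace ((e^2*D*nn/2 + e^2*INR N*d/2 - e^2*nn*d - e^2*nn^2)*P2 zz)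
      with ((e^2*D*nn/2 + e^2*INR N*d/2 - e^2*nn*d)*P2 zz - e*nn*(zz*P2 zz)) by (rewrite Hz; ring).
    eapply Rle_trans; [apply Rabs_triang|]. rewrite Rabs_Ropp, !Rabs_mult.
    assert (c1 : Rabs (e^2*D*nn/2 + e^2*INR N*d/2 - e^2*nn*d) <= e^2*D*nn/2 + e^2*INR N*d/2 + e^2*nn*d).
    { assert (0 <= e^2*D*nn/2) by (apply Rmult_le_pos; [|lra]; apply Rmult_le_pos; [|lra]; apply Rmult_le_pos; [apply pow_le|]; lra).
      assert (0 <= e^2*INR N*d/2) by (apply Rmult_le_pos; [|lra]; apply Rmult_le_pos; [|lra]; apply Rmult_le_pos; [apply pow_le|]; lra).
      assert (0 <= e^2*nn*d) by (apply Rmult_le_pos; [|lra]; apply Rmult_le_pos; [apply pow_le|]; lra).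
      apply Rabs_le; lra. }
    rewrite (Rabs_right e) by lra. rewrite (Rabs_right nn) by lra.
    apply Rplus_le_compat.
    - apply Rmult_le_compat; try apply Rabs_pos; assumption.
    - apply Rmult_le_compat_l; [nra|rewrite <- Rabs_mult; exact B2]. }
  assert (BE : Rabs E <= w*e^2*((D+INR N)*nn + INR N*(d+nn) + 2*(d+INR N)*nn)).
  { unfold E. replace ((D+INR N)*nn*rr + INR N*(d+nn)*ss - nn*(d+nn)*(rr + ss))
      with ((D+INR N)*(nn*rr) + INR N*(d+nn)*ss - (d+nn)*(nn*rr) - nn*(d+nn)*ss) by ring.
    assert (Hwe : 0 <= w*e^2) by (apply Rmult_le_pos; [lra|apply pow_le; lra]).
    assert (A1 : Rabs ((D+INR N)*(nn*rr)) <= (D+INR N)*(nn*(w*e^2))).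
    { rewrite Rabs_mult, (Rabs_right (D+INR N)) by lra. apply Rmult_le_compat_l; [lra|exact Hr]. }
    assert (A2 : Rabs (INR N*(d+nn)*ss) <= INR N*(d+nn)*(w*e^2)).
    { rewrite Rabs_mult, (Rabs_right (INR N*(d+nn))) by nra. apply Rmult_le_compat_l; [nra|exact Hs]. }
    assert (A3 : Rabs ((d+nn)*(nn*rr)) <= (d+INR N)*(nn*(w*e^2))).
    { rewrite Rabs_mult, (Rabs_right (d+nn)) by lra. apply Rmult_le_compat; try lra; try apply Rabs_pos. }
    assert (A4 : Rabs (nn*(d+nn)*ss) <= nn*(d+INR N)*(w*e^2)).
    { rewrite Rabs_mult, (Rabs_right (nn*(d+nn))) by nra. apply Rmult_le_compat; try lra; try apply Rabs_pos; nra. }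
    eapply Rle_trans; [apply abs4|]. nra. }
  assert (HD2 : 0 < D^2) by (apply pow_lt; lra).
  replace ((T1 + T2 + E) / D^2) with ((T1+T2+E) * / D^2) by reflexivity.
  rewrite Rabs_mult, (Rabs_right (/ D^2)) by (apply Rle_ge; left; apply Rinv_0_lt_compat; lra).
  apply Rle_trans with ((d*D*B*e*nn + ((e^2*D*nn/2 + e^2*INR N*d/2 + e^2*nn*d)*B + e*nn*B) + w*e^2*((D+INR N)*nn + INR N*(d+nn) + 2*(d+INR N)*nn)) * / D^2).
  - apply Rmult_le_compat_r; [left; apply Rinv_0_lt_compat; lra|].
    eapply Rle_trans; [apply abs3|]. lra.
  - right. unfold cn, c0. field. lra.
Qed.

Theorem lemma3p2 (rho : R) (d : nat -> R) (h h1 h2 : R -> R) :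
  0 < rho ->
  (forall L, 0 < d L) ->
  is_lim_seq d 0 ->
  is_lim_seq (fun L => d L * INR L) p_infty ->
  in_DAhat h ->
  deriv_on_Rplus h h1 -> deriv_on_Rplus h1 h2 ->
  forall eps, 0 < eps ->
  exists delta, 0 < delta /\ exists L0 : nat,
    forall L N : nat, (L0 <= L)%nat -> (L0 <= N)%nat ->
      Rabs (INR N / INR L - rho) < delta ->
      forall eta, Omega L N eta ->
        Rabs (/ (d L * INR L) * gen L (d L) (fun e => muhat L N (d L) e h) eta
              - muhat L N (d L) eta (Ahat h h1 h2)) <= eps.
Proof.
  intros Hrho dpos dlim Dlim HDA Hh Hh1 eps Heps.
  destruct (analysis_pkg h h1 h2 HDA Hh Hh1) as [P [P1 [P2 [B [HB [dP [dP1 [Eq [Bnd UC]]]]]]]]].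
  assert (Lip : forall z, 0 <= z -> Rabs (P1 z - P1 0) <= B * z).
  { intros z Hz. apply (mvt_bound P1 P2 B z dP1 Hz). intros s Hs. apply (Bnd s ltac:(lra)). }
  set (w := eps/16). assert (Hw : 0 < w) by (unfold w; lra).
  destruct (UC w Hw) as [dw [Hdw Hdw2]].
  assert (Tay : forall ep, 0 < ep -> ep < dw -> forall z, 0 <= z ->
     (ep <= z -> Rabs (P(z-ep) - P z + ep*P1 z - ep^2/2*P2 z) <= w*ep^2) /\
     Rabs (P(z+ep) - P z - ep*P1 z - ep^2/2*P2 z) <= w*ep^2).
  { intros ep Hep Hepd z Hz. split.
    - intros Hez. pose proof (taylor2 P P1 P2 dP dP1 z (-ep) w) as T.
      replace (z + - ep) with (z - ep) in T by field.
      replace (P (z - ep) - P z - - ep * P1 z - (- ep) ^ 2 / 2 * P2 z) with (P(z-ep) - P z + ep*P1 z - ep^2/2*P2 z) in T by field.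
      replace (w * (- ep)^2) with (w*ep^2) in T by field. apply T.
      intros s Hs. rewrite Rmin_right in Hs by lra. rewrite Rmax_left in Hs by lra.
      apply Hdw2; try lra. rewrite Rabs_left1 by lra. lra.
    - pose proof (taylor2 P P1 P2 dP dP1 z ep w) as T.
      replace (P (z + ep) - P z - ep * P1 z - ep ^ 2 / 2 * P2 z) with (P(z+ep) - P z - ep*P1 z - ep^2/2*P2 z) in T by field.
      apply T.
      intros s Hs. rewrite Rmin_left in Hs by lra. rewrite Rmax_right in Hs by lra.
      apply Hdw2; try lra. rewrite Rabs_right by lra. lra. }
  set (K := 8*(B+1)/eps + 1).
  set (m1 := Rmin (Rmin (dw/2) 1) (eps/(8*(B+1)))).
  assert (Hm1 : 0 < m1) by (unfold m1; repeat apply Rmin_pos; try lra; apply Rdiv_lt_0_compat; lra).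
  set (eta0 := Rmin (rho/2 * m1) (Rmin 1 (eps/(8*(B+1))))).
  assert (Heta0 : 0 < eta0) by (unfold eta0; repeat apply Rmin_pos; try nra; apply Rdiv_lt_0_compat; lra).
  apply is_lim_seq_spec in dlim. apply is_lim_seq_spec in Dlim.
  destruct (dlim (mkposreal _ Heta0)) as [L1 HL1].
  destruct (Dlim K) as [L2 HL2].
  exists (rho/2). split; [lra|]. exists (max (max L1 L2) 1).
  intros L N HLL HNN Hrat eta HOm.
  specialize (HL1 L ltac:(lia)). specialize (HL2 L ltac:(lia)). simpl in HL1.
  rewrite Rminus_0_r, Rabs_right in HL1 by (left; apply dpos).
  set (dd := d L) in *. pose proof (dpos L) as Hdd. fold dd in Hdd.
  assert (HNr : 0 < INR N) by (apply lt_0_INR; lia).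
  assert (HLr : 0 < INR L) by (apply lt_0_INR; lia).
  set (D := dd * INR L) in *.
  set (ep := D / INR N).
  assert (Hep : 0 < ep) by (unfold ep; apply Rdiv_lt_0_compat; [unfold D; nra| lra]).
  assert (Hrat2 : rho/2 < INR N / INR L) by (apply Rabs_def2 in Hrat; lra).
  assert (Eep : ep * (INR N / INR L) = dd) by (unfold ep, D; field; lra).
  assert (Hd1 : dd < rho/2 * m1) by (eapply Rlt_le_trans; [exact HL1| apply Rmin_l]).
  assert (Hd2 : dd < Rmin 1 (eps/(8*(B+1)))) by (eapply Rlt_le_trans; [exact HL1| apply Rmin_r]).
  assert (Hep1 : ep < m1).
  { assert (ep * (rho/2) < rho/2 * m1) by nra. nra. }
  assert (Hm1a : m1 <= dw/2) by (unfold m1; eapply Rle_trans; [apply Rmin_l| apply Rmin_l]).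
  assert (Hm1b : m1 <= 1) by (unfold m1; eapply Rle_trans; [apply Rmin_l| apply Rmin_r]).
  assert (Hm1c : m1 <= eps/(8*(B+1))) by (unfold m1; apply Rmin_r).
  assert (Hdd1 : dd <= 1) by (pose proof (Rmin_l 1 (eps/(8*(B+1)))); lra).
  assert (Hdd2 : dd <= eps/(8*(B+1))) by (pose proof (Rmin_r 1 (eps/(8*(B+1)))); lra).
  pose proof (main_bound L N dd eta h h1 h2 P P1 P2 B w ltac:(lia) ltac:(lia) Hdd HB ltac:(lra) HOm Eq Bnd Lip) as MB.
  fold D ep in MB.
  eapply Rle_trans; [apply MB; apply Tay; lra|].
  assert (HK : 8*(B+1)/eps < D) by (unfold K in HL2; lra).
  assert (HD1 : 1 <= D).
  { assert (0 < 8*(B+1)/eps) by (apply Rdiv_lt_0_compat; lra). unfold K in HL2. lra. }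
  assert (HB8 : (B+1) <= eps/8 * D).
  { apply (Rmult_lt_compat_r (eps/8)) in HK; [|lra]. replace (8*(B+1)/eps*(eps/8)) with (B+1) in HK by (field; lra). lra. }
  assert (T1 : dd*B <= eps/8).
  { assert (dd*(B+1) <= eps/8). { apply (Rmult_le_compat_r (B+1)) in Hdd2; [|lra]. replace (eps/(8*(B+1))*(B+1)) with (eps/8) in Hdd2 by (field; lra). exact Hdd2. } nra. }
  assert (T2 : ep*B <= eps/8).
  { assert (ep*(B+1) <= eps/8). { assert (ep <= eps/(8*(B+1))) by lra. apply (Rmult_le_compat_r (B+1)) in H; [|lra]. replace (eps/(8*(B+1))*(B+1)) with (eps/8) in H by (field; lra). exact H. } nra. }
  assert (T3 : ep*dd*B/D <= eps/8).
  { assert (ep*dd*B/D <= dd*B). { apply Rmult_le_reg_r with D; [lra|]. replace (ep*dd*B/D*D) with (ep*(dd*B)) by (field; lra). assert (0 <= dd*B) by nra. nra. } lra. }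
  assert (T4 : B/D <= eps/8).
  { apply Rmult_le_reg_r with D; [lra|]. replace (B/D*D) with B by (field; lra). lra. }
  assert (T5 : w*(2*ep+4+2*dd/INR N) <= eps/2).
  { assert (dd/INR N <= 1). { apply Rmult_le_reg_r with (INR N); [lra|]. replace (dd/INR N*INR N) with dd by (field; lra).
      assert (1 <= INR N) by (replace 1 with (INR 1) by reflexivity; apply le_INR; lia). nra. }
    unfold w. nra. }
  lra.
Qed.
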